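(* Let $\boldsymbol{m}\in\mathbb{N}^2$, $\mathscr{f}\in C(\mathbb{D})$, and $f(\boldsymbol{i})=\mathscr{f}(r_{i_1},\theta_{i_2})$ for $\boldsymbol{i}\in\mathrm{I}^{(\boldsymbol{m})}$. Let $P_f$ be the unique function in $\Pi_\square=\mathrm{span}\{X_{\boldsymbol{\gamma}}:\boldsymbol{\gamma}\in\Gamma_\square\}$ with $P_f(r_{i_1},\theta_{i_2})=f(\boldsymbol{i})$ for all $\boldsymbol{i}\in\mathrm{I}^{(\boldsymbol{m})}$. Then $P_f\in C(\mathbb{D})$; in particular $P_f(0,\theta)=\mathscr{f}(0,0)$ for all $\theta\in[-\pi,\pi]$.
   Context: Functions on the unit disk are written in polar coordinates $(r,\theta)\in[0,1]\times[-\pi,\pi]$, and $C(\mathbb{D})$ is the set of continuous $\mathscr{f}$ on $[0,1]\times[-\pi,\pi]$ with $\mathscr{f}(r,-\pi)=\mathscr{f}(r,\pi)$ for $0\le r\le1$ and $\mathscr{f}(0,\theta_1)=\mathscr{f}(0,\theta_2)$ for all $\theta_1,\theta_2$ (the common value at $r=0$ is written $\mathscr{f}(0,0)$). $\mathrm{I}^{(\boldsymbol{m})}=\{(i_1,i_2)\in\mathbb{Z}^2:\ 0\le i_1\le m_1,\ -2m_2<i_2\le 2m_2,\ i_2\le0\text{ if }i_1=m_1,\ i_1+i_2\text{ even}\}$, $r_{i_1}=\cos\!\big(\frac{i_1\pi}{2m_1}\big)$, $\theta_{i_2}=\frac{i_2\pi}{2m_2}$. $X_{\boldsymbol{\gamma}}(r,\theta)=T_{\gamma_1}(r)e^{\mathrm{i}\gamma_2\theta}$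 with $T_n(r)=\cos(n\arccos r)$. $\Gamma_\square=\{\boldsymbol{\gamma}\in\mathbb{Z}^2: 0\le\gamma_1\le2m_1,\ -m_2<\gamma_2\le m_2,\ \gamma_1+\gamma_2\text{ even}\}$; the interpolation problem in $\Pi_\square$ has a unique solution. *)

(* Defs.v *)
From Stdlib Require Import Reals Lra Lia ZArith List.
Import ListNotations.
Open Scope R_scope.

Definition Cplx : Type := (R * R)%type.
Definition C0 : Cplx := (0, 0).
Definition Cadd (a b : Cplx) : Cplx := (fst a + fst b, snd a + snd b).
Definition Cmul (a b : Cplx) : Cplx :=
  (fst a * fst b - snd a * snd b, fst a * snd b + snd a * fst b).

Definition chebT (n : Z) (r : R) : R := cos (IZR n * acos r).

Definition Xg (g : Z * Z) (r th : R) : Cplx :=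
  (chebT (fst g) r * cos (IZR (snd g) * th),
   chebT (fst g) r * sin (IZR (snd g) * th)).

(** Gamma_square = {(g1,g2) : 0 <= g1 <= 2 m1, -m2 < g2 <= m2, g1+g2 even},
    listed without repetition. *)
Definition Gamma_sq (m1 m2 : nat) : list (Z * Z) :=
  filter (fun g => Z.even (fst g + snd g))
    (list_prod (map Z.of_nat (seq 0 (2 * m1 + 1)))
               (map (fun k => (Z.of_nat k - Z.of_nat m2 + 1)%Z) (seq 0 (2 * m2)))).

Definition Ppoly (m1 m2 : nat) (c : Z * Z -> Cplx) (r th : R) : Cplx :=
  fold_right (fun g acc => Cadd (Cmul (c g) (Xg g r th)) acc) C0 (Gamma_sq m1 m2).

Definition in_I (m1 m2 : nat) (i1 i2 : Z) : Prop :=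
  (0 <= i1 <= Z.of_nat m1)%Z /\
  (- 2 * Z.of_nat m2 < i2 <= 2 * Z.of_nat m2)%Z /\
  (i1 = Z.of_nat m1 -> (i2 <= 0)%Z) /\
  Z.Even (i1 + i2).

Definition r_node (m1 : nat) (i1 : Z) : R := cos (IZR i1 * PI / (2 * INR m1)).
Definition th_node (m2 : nat) (i2 : Z) : R := IZR i2 * PI / (2 * INR m2).

Definition cont_rect (F : R -> R -> Cplx) : Prop :=
  forall r th, 0 <= r <= 1 -> - PI <= th <= PI ->
  forall eps, 0 < eps -> exists delta, 0 < delta /\
    forall r' th', 0 <= r' <= 1 -> - PI <= th' <= PI ->
      Rabs (r' - r) < delta -> Rabs (th' - th) < delta ->
      Rabs (fst (F r' th') - fst (F r th)) < eps /\
      Rabs (snd (F r' th') - snd (F r th)) < eps.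

Definition in_CD (F : R -> R -> Cplx) : Prop :=
  cont_rect F /\
  (forall r, 0 <= r <= 1 -> F r (- PI) = F r PI) /\
  (forall th1 th2, - PI <= th1 <= PI -> - PI <= th2 <= PI -> F 0 th1 = F 0 th2).

(* Main.v *)
Require Import Defs.
From Stdlib Require Import Reals ZArith List Lra Lia.
From Coquelicot Require Import Coquelicot.
Open Scope R_scope.

Definition JC (G : R -> R -> R) : Prop :=
  forall r th, continuous (fun q : R * R => G (fst q) (snd q)) (r, th).

Lemma JC_plus F G : JC F -> JC G -> JC (fun r t => F r t + G r t).
Proof. intros HF HG r t. exact (continuous_plus _ _ _ (HF r t) (HG r t)). Qed.
Lemma JC_mult F G : JC F -> JC G -> JC (fun r t => F r t * G r t).
Proof. intros HF HG r t. exact (continuous_mult _ _ _ (HF r t) (HG r t)). Qed.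
Lemma JC_opp F : JC F -> JC (fun r t => - F r t).
Proof. intros HF r t. exact (continuous_opp _ _ (HF r t)). Qed.
Lemma JC_minus F G : JC F -> JC G -> JC (fun r t => F r t - G r t).
Proof. intros HF HG. apply JC_plus; auto. apply JC_opp; auto. Qed.
Lemma JC_const a : JC (fun _ _ => a).
Proof. intros r t. apply continuous_const. Qed.
Lemma JC_r h : continuity h -> JC (fun r _ => h r).
Proof. intros Hh r t.
  apply (continuous_comp (fun q : R * R => fst q) h).
  apply continuous_fst. simpl. apply continuity_pt_filterlim. apply Hh. Qed.
Lemma JC_th h : continuity h -> JC (fun _ t => h t).
Proof. intros Hh r t.
  apply (continuous_comp (fun q : R * R => snd q) h).
  apply continuous_snd. simpl. apply continuity_pt_filterlim. apply Hh. Qed.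

Lemma JC_eps G r t eps : JC G -> 0 < eps -> exists d, 0 < d /\
  forall r' t', Rabs (r' - r) < d -> Rabs (t' - t) < d -> Rabs (G r' t' - G r t) < eps.
Proof.
  intros HG He. specialize (HG r t).
  apply filterlim_locally with (eps := mkposreal eps He) in HG.
  destruct (proj2 (locally_2d_locally (fun u v => ball (G r t) (mkposreal eps He) (G u v)) r t) HG) as [d Hd].
  exists d. split. apply cond_pos. intros r' t' H1 H2.
  specialize (Hd r' t' H1 H2). exact Hd.
Qed.
Lemma continuity_id : continuity (fun x => x).
Proof. apply derivable_continuous, derivable_id. Qed.
Lemma continuity_pt_id x : continuity_pt (fun x => x) x.
Proof. apply continuity_id. Qed.
Fixpoint Q (n : nat) (r : R) : R :=
  match n with
  | O => 1
  | S O => r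
  | S ((S k) as n1) => 2 * r * Q n1 r - Q k r
  end.

Lemma Q_cont_aux n : continuity (Q n) /\ continuity (Q (S n)).
Proof.
  induction n as [|n [IH1 IH2]].
  - split. simpl. apply continuity_const. intros a b; reflexivity.
    simpl. apply continuity_id.
  - split. exact IH2.
    change (continuity (fun r => 2 * r * Q (S n) r - Q n r)).
    apply continuity_minus; auto. apply continuity_mult; auto.
    apply continuity_mult. apply continuity_const. intros a b; reflexivity.
    apply continuity_id.
Qed.

Lemma cont_lin a : continuity (fun t => a * t).
Proof. apply continuity_mult. intros x; apply continuity_pt_const; intros u v; reflexivity.
  apply continuity_id. Qed.
Lemma cont_cos_lin a : continuity (fun t => cos (a * t)).
Proof. intro x. apply (continuity_pt_comp (fun t => a*t) cos). apply cont_lin. apply continuity_cos. Qed.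
Lemma cont_sin_lin a : continuity (fun t => sin (a * t)).
Proof. intro x. apply (continuity_pt_comp (fun t => a*t) sin). apply cont_lin. apply continuity_sin. Qed.

Lemma cos_rec a x : cos (x + 2 * a) = 2 * cos a * cos (x + a) - cos x.
Proof.
  replace (x + 2 * a) with ((x + a) + a) by ring.
  replace x with ((x + a) - a) at 3 by ring.
  rewrite cos_plus, cos_minus. ring.
Qed.

Lemma chebT_Q n r : -1 <= r <= 1 -> chebT (Z.of_nat n) r = Q n r.
Proof.
  intros Hr. unfold chebT. rewrite <- INR_IZR_INZ.
  cut (cos (INR n * acos r) = Q n r /\ cos (INR (S n) * acos r) = Q (S n) r).
  { tauto. }
  induction n as [|n [IH1 IH2]].
  - simpl. rewrite Rmult_0_l, cos_0. split; auto.
    rewrite Rmult_1_l. apply cos_acos; auto.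
  - split; auto.
    change (Q (S (S n)) r) with (2 * r * Q (S n) r - Q n r).
    rewrite <- IH1, <- IH2.
    replace (2 * r) with (2 * cos (acos r)) by (rewrite cos_acos; auto).
    pose proof (cos_rec (acos r) (INR n * acos r)) as E.
    replace (INR n * acos r + acos r) with (INR (S n) * acos r) in E by (rewrite S_INR; ring).
    rewrite <- E. f_equal. rewrite !S_INR. ring.
Qed.

Lemma Ppoly_JC_aux (L : list (Z * Z)) (c : Z * Z -> Cplx) :
  (forall g, In g L -> (0 <= fst g)%Z) ->
  exists G1 G2, JC G1 /\ JC G2 /\ forall r th, 0 <= r <= 1 ->
   fold_right (fun g acc => Cadd (Cmul (c g) (Xg g r th)) acc) C0 L = (G1 r th, G2 r th).
Proof.
  induction L as [|g L IH]; intros HL.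
  - exists (fun _ _ => 0), (fun _ _ => 0). split. apply JC_const. split. apply JC_const.
    reflexivity.
  - destruct IH as [G1 [G2 [H1 [H2 H3]]]]. intros; apply HL; simpl; auto.
    set (n := Z.to_nat (fst g)).
    set (T := fun r (_ : R) => Q n r).
    set (Co := fun (_ : R) t => cos (IZR (snd g) * t)).
    set (Si := fun (_ : R) t => sin (IZR (snd g) * t)).
    assert (HT : JC T). { apply JC_r. apply Q_cont_aux. }
    assert (HCo : JC Co). { apply (JC_th (fun t => cos (IZR (snd g) * t))).
      apply cont_cos_lin. }
    assert (HSi : JC Si). { apply (JC_th (fun t => sin (IZR (snd g) * t))).
      apply cont_sin_lin. }
    exists (fun r t => fst (c g) * (T r t * Co r t) - snd (c g) * (T r t * Si r t) + G1 r t).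
    exists (fun r t => fst (c g) * (T r t * Si r t) + snd (c g) * (T r t * Co r t) + G2 r t).
    split. apply JC_plus; auto. apply JC_minus; apply JC_mult; try apply JC_const; apply JC_mult; auto.
    split. apply JC_plus; auto. apply JC_plus; apply JC_mult; try apply JC_const; apply JC_mult; auto.
    intros r th Hr. simpl fold_right. rewrite H3 by auto.
    assert (Hg : chebT (fst g) r = Q n r).
    { rewrite <- chebT_Q by lra. unfold n. rewrite Z2Nat.id; auto. apply HL; simpl; auto. }
    unfold Cadd, Cmul, Xg, T, Co, Si. simpl. rewrite Hg. reflexivity.
Qed.

Lemma JC_cont_rect F G1 G2 : JC G1 -> JC G2 ->
  (forall r th, 0 <= r <= 1 -> F r th = (G1 r th, G2 r th)) -> cont_rect F.
Proof.
  intros H1 H2 HF r th Hr Hth eps He.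
  destruct (JC_eps G1 r th eps H1 He) as [d1 [Hd1 P1]].
  destruct (JC_eps G2 r th eps H2 He) as [d2 [Hd2 P2]].
  exists (Rmin d1 d2). split. apply Rmin_pos; auto.
  intros r' th' Hr' Hth' A B.
  rewrite (HF r th Hr), (HF r' th' Hr'). simpl.
  split; [apply P1|apply P2]; eapply Rlt_le_trans; eauto; first [apply Rmin_l | apply Rmin_r].
Qed.
Definition cis (x : R) : C := (cos x, sin x).
Fixpoint csum (n : nat) (f : nat -> C) : C :=
  match n with O => RtoC 0 | S k => Cplus (csum k f) (f k) end.

Lemma cis_add x y : cis (x + y) = Cmult (cis x) (cis y).
Proof. unfold cis, Cmult; simpl. rewrite cos_plus, sin_plus. f_equal; ring. Qed.
Lemma cis_0 : cis 0 = RtoC 1.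
Proof. unfold cis, RtoC. rewrite cos_0, sin_0. reflexivity. Qed.

Lemma csum_plus n f g : csum n (fun j => Cplus (f j) (g j)) = Cplus (csum n f) (csum n g).
Proof. induction n; simpl. apply injective_projections; simpl; ring. rewrite IHn. ring. Qed.
Lemma csum_scal n a f : csum n (fun j => Cmult a (f j)) = Cmult a (csum n f).
Proof. induction n; simpl. apply injective_projections; simpl; ring. rewrite IHn. ring. Qed.
Lemma csum_ext n f g : (forall j, (j < n)%nat -> f j = g j) -> csum n f = csum n g.
Proof. induction n; intros H; simpl; auto. rewrite IHn by (intros; apply H; lia). rewrite H by lia. auto. Qed.
Lemma csum_swap n k F : csum n (fun j => csum k (fun l => F j l)) = csum k (fun l => csum n (fun j => F j l)).
Proof. induction n; simpl.
  - induction k; simpl; auto. rewrite <- IHk. apply injective_projections; simpl; ring.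
  - rewrite IHn. rewrite <- csum_plus. auto. Qed.
Lemma csum_zero n f : (forall j, (j < n)%nat -> f j = RtoC 0) -> csum n f = RtoC 0.
Proof. induction n; intros H; simpl; auto. rewrite IHn, H by (intros; try apply H; lia).
  apply injective_projections; simpl; ring. Qed.
Lemma csum_delta n l0 f : (l0 < n)%nat -> (forall l, (l < n)%nat -> l <> l0 -> f l = RtoC 0) ->
  csum n f = f l0.
Proof. induction n; intros H1 H2. lia. simpl.
  destruct (Nat.eq_dec l0 n) as [->|Hne].
  - rewrite csum_zero. ring. intros; apply H2; lia.
  - rewrite IHn by (intros; try apply H2; lia). rewrite (H2 n) by lia. ring. Qed.
Lemma csum_one n : csum n (fun _ => RtoC 1) = RtoC (INR n).
Proof. induction n; cbn [csum]; auto. rewrite IHn, S_INR. unfold RtoC, Cplus; simpl. f_equal; ring. Qed.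

Lemma geo n b : Cmult (Cminus (cis b) 1) (csum n (fun j => cis (INR j * b))) = Cminus (cis (INR n * b)) 1.
Proof. induction n; cbn [csum].
  - simpl INR. rewrite Rmult_0_l, cis_0. ring.
  - rewrite Cmult_plus_distr_l, IHn. rewrite S_INR.
    replace ((INR n + 1) * b) with (INR n * b + b) by ring. rewrite cis_add. ring.
Qed.

Lemma cis_int2pi d : cis (IZR d * (2 * PI)) = RtoC 1.
Proof.
  assert (Hs : sin (IZR d * PI) = 0) by (apply sin_eq_0_1; eauto).
  replace (IZR d * (2 * PI)) with (2 * (IZR d * PI)) by ring.
  unfold cis, RtoC. rewrite cos_2a_sin, sin_2a, Hs. f_equal; ring.
Qed.

Lemma cis_ne1 (m : nat) d : (0 < m)%nat -> d <> 0%Z -> (- Z.of_nat m < d < Z.of_nat m)%Z ->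
  cis (-2 * IZR d * PI / INR m) <> RtoC 1.
Proof.
  intros Hm Hd Hdm E. unfold cis, RtoC in E. injection E as E1 E2.
  set (y := IZR d * PI / INR m).
  assert (Hmr : 0 < INR m) by (apply lt_0_INR; auto).
  replace (-2 * IZR d * PI / INR m) with (2 * (- y)) in E1 by (unfold y; field; lra).
  rewrite cos_2a_sin, sin_neg in E1.
  assert (sin y <> 0).
  { assert (Hr : IZR (Z.of_nat m) = INR m) by (rewrite INR_IZR_INZ; auto).
    destruct (Z_lt_le_dec 0 d) as [Hp|Hn].
    - apply Rgt_not_eq, sin_gt_0. unfold y. apply Rdiv_lt_0_compat; auto.
      apply Rmult_lt_0_compat. apply IZR_lt; auto. apply PI_RGT_0.
      unfold y. apply Rmult_lt_reg_r with (INR m); auto.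
      replace (IZR d * PI / INR m * INR m) with (IZR d * PI) by (field; lra).
      assert (IZR d < INR m) by (rewrite <- Hr; apply IZR_lt; lia). pose proof PI_RGT_0. nra.
    - assert (sin (-y) > 0).
      { unfold y. apply sin_gt_0. replace (- (IZR d * PI / INR m)) with (IZR (-d) * PI / INR m)
          by (rewrite opp_IZR; field; lra).
        apply Rdiv_lt_0_compat; auto.
        apply Rmult_lt_0_compat. apply IZR_lt; lia. apply PI_RGT_0.
        replace (- (IZR d * PI / INR m)) with (IZR (-d) * PI / INR m)
          by (rewrite opp_IZR; field; lra).
        apply Rmult_lt_reg_r with (INR m); auto.
        replace (IZR (-d) * PI / INR m * INR m) with (IZR (-d) * PI) by (field; lra).
        assert (IZR (-d) < INR m) by (rewrite <- Hr; apply IZR_lt; lia). pose proof PI_RGT_0.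
        assert (0 < (INR m - IZR (-d)) * PI) by (apply Rmult_lt_0_compat; lra). lra. }
      rewrite sin_neg in H. lra. }
  apply H. assert (Hss : sin y * sin y = 0) by lra.
  destruct (Rmult_integral _ _ Hss); auto.
Qed.
Definition nd (m : nat) (p : Z) (j : nat) : R := th_node m (-(2 * Z.of_nat j + p))%Z.

Lemma ortho0 m p : csum m (fun j => cis (2 * IZR 0 * nd m p j)) = RtoC (INR m).
Proof. rewrite <- csum_one. apply csum_ext. intros. rewrite <- cis_0. f_equal. ring. Qed.

Lemma ortho m p d : (0 < m)%nat -> d <> 0%Z -> (- Z.of_nat m < d < Z.of_nat m)%Z ->
  csum m (fun j => cis (2 * IZR d * nd m p j)) = RtoC 0.
Proof.
  intros Hm Hd Hdm.
  assert (Hmr : 0 < INR m) by (apply lt_0_INR; auto).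
  set (a := - IZR d * IZR p * PI / INR m).
  set (b := -2 * IZR d * PI / INR m).
  rewrite (csum_ext _ _ (fun j => Cmult (cis a) (cis (INR j * b)))).
  2:{ intros j _. rewrite <- cis_add. f_equal. unfold nd, th_node, a, b.
      rewrite opp_IZR, plus_IZR, mult_IZR, <- INR_IZR_INZ. field. lra. }
  rewrite csum_scal.
  pose proof (geo m b) as Hg.
  replace (INR m * b) with (IZR (-d) * (2 * PI)) in Hg
    by (unfold b; rewrite opp_IZR; field; lra).
  rewrite cis_int2pi in Hg.
  assert (Hz : cis b <> RtoC 1) by (apply cis_ne1; auto).
  set (S := csum m (fun j => cis (INR j * b))) in *.
  assert (HS : S = Cmult (Cinv (Cminus (cis b) 1)) (Cmult (Cminus (cis b) 1) S)).
  { field. intro E. apply Hz. replace (cis b) with (Cplus (Cminus (cis b) 1) 1) by ring.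
    rewrite E. ring. }
  rewrite HS, Hg. ring.
Qed.

Definition L0 (m : nat) : Z := (- ((Z.of_nat m - 1) / 2))%Z.
Definition Ker m t := csum m (fun l => cis (2 * IZR (L0 m + Z.of_nat l) * t)).
Definition Rec m p (S : R -> C) (t : R) : C :=
  Cmult (Cinv (RtoC (INR m))) (csum m (fun j => Cmult (S (nd m p j)) (Ker m (t - nd m p j)))).

Lemma Rec_plus m p F G t : Rec m p (fun x => Cplus (F x) (G x)) t = Cplus (Rec m p F t) (Rec m p G t).
Proof. unfold Rec. rewrite <- Cmult_plus_distr_l, <- csum_plus. f_equal. apply csum_ext.
  intros. ring. Qed.
Lemma Rec_scal m p a F t : Rec m p (fun x => Cmult a (F x)) t = Cmult a (Rec m p F t).
Proof. unfold Rec.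
  rewrite (csum_ext _ _ (fun j => Cmult a (Cmult (F (nd m p j)) (Ker m (t - nd m p j))))) by (intros; ring).
  rewrite csum_scal. ring. Qed.
Lemma Rec_ext m p F G t : (forall j, (j < m)%nat -> F (nd m p j) = G (nd m p j)) -> Rec m p F t = Rec m p G t.
Proof. intros H. unfold Rec. f_equal. apply csum_ext. intros j Hj. rewrite H; auto. Qed.
Lemma Rec_zero m p F t : (forall j, (j < m)%nat -> F (nd m p j) = RtoC 0) -> Rec m p F t = RtoC 0.
Proof. intros H. unfold Rec. rewrite csum_zero. ring. intros j Hj. rewrite H; auto. ring. Qed.

Lemma Rec_cis m p k t : (0 < m)%nat -> (L0 m <= k < L0 m + Z.of_nat m)%Z ->
  Rec m p (fun x => cis (2 * IZR k * x)) t = cis (2 * IZR k * t).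
Proof.
  intros Hm Hk. assert (Hmr : 0 < INR m) by (apply lt_0_INR; auto).
  unfold Rec, Ker.
  rewrite (csum_ext _ _ (fun j => csum m (fun l => Cmult (cis (2 * IZR (L0 m + Z.of_nat l) * t))
       (cis (2 * IZR (k - (L0 m + Z.of_nat l)) * nd m p j))))).
  2:{ intros j _. rewrite <- csum_scal. apply csum_ext. intros l _. rewrite <- !cis_add.
      f_equal. rewrite minus_IZR. ring. }
  rewrite csum_swap.
  rewrite (csum_ext _ _ (fun l => Cmult (cis (2 * IZR (L0 m + Z.of_nat l) * t))
       (csum m (fun j => cis (2 * IZR (k - (L0 m + Z.of_nat l)) * nd m p j))))).
  2:{ intros l _. rewrite csum_scal. auto. }
  rewrite (csum_delta m (Z.to_nat (k - L0 m))).
  - replace (k - (L0 m + Z.of_nat (Z.to_nat (k - L0 m))))%Z with 0%Z by lia.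
    replace (L0 m + Z.of_nat (Z.to_nat (k - L0 m)))%Z with k by lia.
    rewrite ortho0. field. intro E. injection E. lra.
  - lia.
  - intros l Hl Hne. rewrite ortho; auto. ring. lia. lia.
Qed.
Lemma win (m:Z) k : (0 < m)%Z -> (- m < 2*k <= m)%Z -> (- ((m - 1) / 2) <= k < - ((m - 1) / 2) + m)%Z.
Proof. intros. pose proof (Z.div_mod (m-1) 2 ltac:(lia)). pose proof (Z.mod_pos_bound (m-1) 2 ltac:(lia)).
set (q := ((m-1)/2)%Z) in *. set (r := ((m-1) mod 2)%Z) in *. clearbody q r. lia. Qed.

Lemma Cadd_Cplus : Cadd = Cplus. Proof. reflexivity. Qed.
Lemma Cmul_Cmult : Cmul = Cmult. Proof. reflexivity. Qed.

Lemma Xg_odd g x : Z.even (fst g) = false -> Xg g 0 x = RtoC 0.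
Proof.
  intros He. assert (Ho : Z.odd (fst g) = true) by (rewrite <- Z.negb_even, He; auto).
  apply Z.odd_spec in Ho. destruct Ho as [k Hk].
  assert (HT : chebT (fst g) 0 = 0).
  { unfold chebT. rewrite acos_0. apply cos_eq_0_1. exists k. rewrite Hk.
    rewrite plus_IZR, mult_IZR. field. }
  unfold Xg. rewrite HT. unfold RtoC. f_equal; ring.
Qed.

Lemma rec_list m2 p (c : Z * Z -> Cplx) : (0 < m2)%nat -> forall L : list (Z * Z),
  (forall g, In g L -> Z.even (fst g + snd g) = true /\ (- Z.of_nat m2 < snd g <= Z.of_nat m2)%Z) ->
  forall t, Rec m2 p (fun x => fold_right (fun g acc => Cadd (Cmul (c g) (Xg g 0 x)) acc) C0 L) t
          = fold_right (fun g acc => Cadd (Cmul (c g) (Xg g 0 t)) acc) C0 L.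
Proof.
  intros Hm. induction L as [|g L IH]; intros HL t.
  - simpl. apply Rec_zero. intros; reflexivity.
  - cbn [fold_right]. rewrite Cadd_Cplus, Cmul_Cmult.
    rewrite Rec_plus. rewrite Cadd_Cplus, Cmul_Cmult in IH. rewrite IH by (intros; apply HL; simpl; auto).
    f_equal. rewrite Rec_scal. f_equal.
    destruct (HL g (or_introl eq_refl)) as [Hev Hb].
    destruct (Z.even (fst g)) eqn:Eg.
    + rewrite Z.even_add, Eg in Hev. destruct (Z.even (snd g)) eqn:E2; [|discriminate].
      apply Z.even_spec in E2. destruct E2 as [k Hk].
      set (T := chebT (fst g) 0).
      assert (Hx : forall x, Xg g 0 x = Cmult (RtoC T) (cis (2 * IZR k * x))).
      { intros x. unfold Xg, cis, RtoC, Cmult. simpl. fold T. rewrite Hk, mult_IZR.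
        f_equal; ring. }
      rewrite (Rec_ext _ _ _ (fun x => Cmult (RtoC T) (cis (2 * IZR k * x)))) by (intros; apply Hx).
      rewrite Rec_scal, Rec_cis, Hx; auto. unfold L0. apply win; lia.
    + rewrite Rec_zero. rewrite Xg_odd; auto. intros; apply Xg_odd; auto.
Qed.

Lemma Xg_per g r : Xg g r (- PI) = Xg g r PI.
Proof.
  unfold Xg. replace (IZR (snd g) * - PI) with (- (IZR (snd g) * PI)) by ring.
  rewrite cos_neg, sin_neg. rewrite sin_eq_0_1 by eauto. f_equal. f_equal. ring.
Qed.

Lemma th_bound m i : (0 < m)%nat -> (- 2 * Z.of_nat m < i <= 2 * Z.of_nat m)%Z ->
  - PI <= th_node m i <= PI.
Proof.
  intros Hm Hi. assert (Hmr : 0 < INR m) by (apply lt_0_INR; auto).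
  unfold th_node.
  assert (H1 : - (2 * INR m) <= IZR i <= 2 * INR m).
  { rewrite INR_IZR_INZ. split.
    - replace (- (2 * IZR (Z.of_nat m))) with (IZR (- 2 * Z.of_nat m)) by (rewrite mult_IZR; simpl; ring).
      apply IZR_le. lia.
    - replace (2 * IZR (Z.of_nat m)) with (IZR (2 * Z.of_nat m)) by (rewrite mult_IZR; simpl; ring).
      apply IZR_le. lia. }
  set (q := IZR i / (2 * INR m)).
  assert (Hq : IZR i = q * (2 * INR m)) by (unfold q; field; lra).
  replace (IZR i * PI / (2 * INR m)) with (q * PI) by (unfold q; field; lra).
  pose proof PI_RGT_0.
  assert (-1 <= q <= 1) by (rewrite Hq in H1; split; nra).
  split; nra.
Qed.
Lemma Gamma_prop m1 m2 g : In g (Gamma_sq m1 m2) ->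
  (0 <= fst g)%Z /\ Z.even (fst g + snd g) = true /\ (- Z.of_nat m2 < snd g <= Z.of_nat m2)%Z.
Proof.
  unfold Gamma_sq. intros H. apply filter_In in H. destruct H as [H He].
  destruct g as [g1 g2]. apply in_prod_iff in H. destruct H as [H1 H2].
  apply in_map_iff in H1. destruct H1 as [a [Ha Ha']].
  apply in_map_iff in H2. destruct H2 as [b [Hb Hb']].
  apply in_seq in Ha'. apply in_seq in Hb'. simpl in *. split; [lia|split; [auto|lia]].
Qed.

Theorem theorem8p1 (m1 m2 : nat) (f : R -> R -> Cplx) (c : Z * Z -> Cplx) :
  (0 < m1)%nat -> (0 < m2)%nat ->
  in_CD f ->
  (forall i1 i2 : Z, in_I m1 m2 i1 i2 ->
     Ppoly m1 m2 c (r_node m1 i1) (th_node m2 i2) = f (r_node m1 i1) (th_node m2 i2)) ->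
  in_CD (Ppoly m1 m2 c) /\
  (forall th, - PI <= th <= PI -> Ppoly m1 m2 c 0 th = f 0 0).
Proof.
  intros Hm1 Hm2 [Hc [Hper H0]] Hint.
  pose proof PI_RGT_0 as HPI.
  assert (HD : forall th, Ppoly m1 m2 c 0 th = f 0 0).
  { intros th.
    set (p := (Z.of_nat m1 mod 2)%Z).
    assert (Hrec : forall t, Rec m2 p (Ppoly m1 m2 c 0) t = Ppoly m1 m2 c 0 t).
    { intros t. unfold Ppoly. apply rec_list; auto. intros g Hg. apply Gamma_prop in Hg. tauto. }
    rewrite <- Hrec.
    rewrite (Rec_ext _ _ _ (fun x => Cmult (f 0 0) (cis (2 * IZR 0 * x)))).
    - rewrite Rec_scal, Rec_cis; auto.
      + replace (2 * IZR 0 * th) with 0 by ring. rewrite cis_0. apply injective_projections; simpl; ring.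
      + unfold L0. apply win; lia.
    - intros j Hj. replace (2 * IZR 0 * nd m2 p j) with 0 by ring. rewrite cis_0.
      replace (Cmult (f 0 0) (RtoC 1)) with (f 0 0) by (apply injective_projections; simpl; ring).
      assert (Hr0 : r_node m1 (Z.of_nat m1) = 0).
      { unfold r_node. rewrite <- INR_IZR_INZ.
        assert (0 < INR m1) by (apply lt_0_INR; auto).
        replace (INR m1 * PI / (2 * INR m1)) with (PI / 2) by (field; lra). apply cos_PI2. }
      assert (HI : in_I m1 m2 (Z.of_nat m1) (- (2 * Z.of_nat j + p))).
      { pose proof (Z.div_mod (Z.of_nat m1) 2 ltac:(lia)).
        pose proof (Z.mod_pos_bound (Z.of_nat m1) 2 ltac:(lia)).
        fold p in H, H1. set (q := (Z.of_nat m1 / 2)%Z) in *. clearbody q p.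
        unfold in_I. split; [lia|split; [lia|split; [lia|]]].
        exists (q - Z.of_nat j)%Z. lia. }
      specialize (Hint _ _ HI). rewrite Hr0 in Hint. unfold nd. rewrite Hint.
      apply H0. apply th_bound; auto. unfold p.
      pose proof (Z.mod_pos_bound (Z.of_nat m1) 2 ltac:(lia)). lia. lra. }
  split.
  - split.
    + destruct (Ppoly_JC_aux (Gamma_sq m1 m2) c) as [G1 [G2 [H1 [H2 H3]]]].
      { intros g Hg. apply Gamma_prop in Hg. tauto. }
      apply (JC_cont_rect _ G1 G2); auto.
    + split.
      * intros r _. unfold Ppoly. induction (Gamma_sq m1 m2) as [|g L IH]; simpl; auto.
        rewrite Xg_per, IH. auto.
      * intros. rewrite !HD. auto.
  - intros. apply HD.
Qed.
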